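(* With $X$, $Q$ as below, for every even $\ell>2$, \[\sum_{j=0}^{n_\ell-1}\mathrm{gap}^{X,Q}_{\ell,j}\ge\delta_\ell\ln(n_\ell)/2,\] where $\mathrm{gap}^{X,Q}_{\ell,j}$ denotes $\mathrm{gap}^{X,Q}_i$ for the index $i$ with $\vec x_i=\vec x_{\ell,j}$.
   Context: $X$ and $Q$ are indexed by layers $\ell\ge2$ and positions $0\le j\le n_\ell-1$, ordered lexicographically in $(\ell,j)$, with $\vec q_0=\vec0$ prepended to $Q$. $n_\ell:=\ell\lceil\ln^2\ell\rceil+1$, $\theta_\ell:=\frac{\pi}{2(n_\ell-1)}$, $\vec x_{\ell,j}:=(\cos(j\theta_\ell),\sin(j\theta_\ell))$ for even $\ell$ and $(\sin(j\theta_\ell),\cos(j\theta_\ell))$ for odd $\ell$. $\alpha:=\sum_{\ell=2}^\infty\frac1{\ell\ln^2\ell}$, $z_\ell:=\frac1\alpha\sum_{m=2}^\ell\frac1{m\ln^2m}$ ($z_1=0$), $\delta_\ell:=z_\ell-z_{\ell-1}=\frac1{\alpha\ell\ln^2\ell}$, $z_{\ell,j}:=1-\delta_\ell\cot((j+1)\theta_\ell)$ for $j<n_\ell-1$, $z_{\ell,n_\ell-1}:=1$. For even $\ell$, $\vec q_{\ell,j}:=(z_\ell,z_{\ell,j})$; for odd $\ell$, $\vec q_{\ell,j}$ is any maximizer of $\vec x_{\ell,j}\cdot\vec q_{\ell',j'}$ over $(\ell',j')$ with $\ell'<\ell$. For a sequence $X=(\vec x_i)$ and $Q=(\vec q_i)_{i\ge0}$,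 $\mathrm{gap}_i^{X,Q}:=\min_{0\le j<i}(\vec q_i-\vec q_j)\cdot\vec x_i$. *)

(* Defs.v *)
From Stdlib Require Import Reals Lra Lia List.
From Coquelicot Require Import Coquelicot.
Import ListNotations.
Open Scope R_scope.

(* ceiling of a real: up x is the least integer > x, so floor x = up x - 1
   and ceil x = - floor (- x) = 1 - up (- x). *)
Definition ceilZ (x : R) : Z := (1 - up (- x))%Z.

Definition nl (l : nat) : nat :=
  (l * Z.to_nat (ceilZ (ln (INR l) ^ 2)) + 1)%nat.

Definition theta (l : nat) : R := PI / (2 * INR (nl l - 1)).

Definition dot (u v : R * R) : R := fst u * fst v + snd u * snd v.

Definition xv (l j : nat) : R * R :=
  if Nat.even l then (cos (INR j * theta l), sin (INR j * theta l))
  else (sin (INR j * theta l), cos (INR j * theta l)).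

Definition tm (m : nat) : R :=
  if (2 <=? m)%nat then 1 / (INR m * ln (INR m) ^ 2) else 0.

Definition alpha : R := Series tm.

Fixpoint psum (l : nat) : R :=
  match l with
  | O => 0
  | S k => psum k + tm (S k)
  end.

Definition zl (l : nat) : R := psum l / alpha.

Definition delta (l : nat) : R := 1 / (alpha * INR l * ln (INR l) ^ 2).

Definition cot (x : R) : R := cos x / sin x.

Definition zlj (l j : nat) : R :=
  if (j <? nl l - 1)%nat then 1 - delta l * cot (INR (j + 1) * theta l) else 1.

Definition qeven (l j : nat) : R * R := (zl l, zlj l j).

(* Indices (l', j') strictly before (l, j) in lexicographic order,
   with l' >= 2 and j' < n_{l'}. *)
Definition earlier (l j : nat) : list (nat * nat) :=
  flat_map (fun l' => map (fun j' => (l', j')) (seq 0 (nl l')))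
           (seq 2 (l - 2))
  ++ map (fun j' => (l, j')) (seq 0 j).

(* gap at index (l,j): minimum over q_0 = 0 and all earlier q's of
   (q_{l,j} - q) . x_{l,j}. *)
Definition gap (Q : nat -> nat -> R * R) (l j : nat) : R :=
  let q := Q l j in
  let x := xv l j in
  fold_right (fun p m => Rmin (dot q x - dot (Q (fst p) (snd p)) x) m)
             (dot q x - dot (0, 0) x)
             (earlier l j).

Definition sumR (f : nat -> R) (n : nat) : R :=
  fold_right Rplus 0 (map f (seq 0 n)).

(* Main.v *)
Require Import Defs.
From Stdlib Require Import Reals Lra Lia List.
From Coquelicot Require Import Coquelicot.
Open Scope R_scope.

Lemma ln_le_xm1 x : 0 < x -> ln x <= x - 1.
Proof. intros H. pose proof (exp_ineq1_le (ln x)). rewrite exp_ln in H0 by lra. lra. Qed.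

Lemma ln_pos_ge2 x : 2 <= x -> 0 < ln x.
Proof. intros H. rewrite <- ln_1. apply ln_increasing; lra. Qed.

Lemma tm_nonneg m : 0 <= tm m.
Proof.
  unfold tm. destruct (2 <=? m)%nat eqn:E; [|lra].
  apply Nat.leb_le in E. apply le_INR in E. simpl in E.
  pose proof (ln_pos_ge2 (INR m) ltac:(lra)).
  apply Rlt_le. unfold Rdiv. rewrite Rmult_1_l. apply Rinv_0_lt_compat.
  apply Rmult_lt_0_compat; [lra|]. apply pow_lt; lra.
Qed.

Lemma psum_nonneg l : 0 <= psum l.
Proof. induction l; simpl; [lra|]. pose proof (tm_nonneg (S l)); lra. Qed.

Lemma psum_mono a b : (a <= b)%nat -> psum a <= psum b.
Proof.
  induction 1; [lra|]. simpl. pose proof (tm_nonneg (S m)); lra.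
Qed.

Lemma sum_n_psum N : sum_n tm N = psum N.
Proof.
  induction N.
  - rewrite sum_O. unfold tm. simpl. reflexivity.
  - rewrite sum_Sn, IHN. reflexivity.
Qed.

Lemma tel x : 2 <= x -> 1 / ((x+1) * ln (x+1) ^ 2) <= 1 / ln x - 1 / ln (x+1).
Proof.
  intros Hx.
  pose proof (ln_pos_ge2 x Hx) as Ha.
  assert (Hab : ln x < ln (x+1)) by (apply ln_increasing; lra).
  assert (Hd : 1/(x+1) <= ln (x+1) - ln x).
  { pose proof (ln_le_xm1 (x/(x+1)) ltac:(apply Rdiv_lt_0_compat; lra)).
    rewrite ln_div in H by lra.
    assert (x/(x+1) - 1 = - (1/(x+1))) by (field; lra). lra. }
  set (a := ln x) in *. set (b := ln (x+1)) in *.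
  replace (1/a - 1/b) with ((b - a) * (1/(a*b))) by (field; lra).
  replace (1 / ((x + 1) * b ^ 2)) with ((1/(x+1)) * (1/(b*b))) by (field; lra).
  apply Rmult_le_compat.
  - apply Rlt_le, Rdiv_lt_0_compat; lra.
  - apply Rlt_le, Rdiv_lt_0_compat; [lra|]. nra.
  - exact Hd.
  - unfold Rdiv. rewrite !Rmult_1_l. apply Rinv_le_contravar; nra.
Qed.

Lemma psum_bound k : psum (k+2) <= tm 2 + 1 / ln 2 - 1 / ln (INR (k+2)).
Proof.
  induction k.
  - replace (INR (0+2)) with 2 by (simpl; lra). simpl psum.
    assert (tm 1 = 0) by (unfold tm; simpl; reflexivity). lra.
  - replace (S k + 2)%nat with (S (k+2)) by lia. simpl psum.
    pose proof (tel (INR (k+2))).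
    rewrite S_INR.
    assert (tm (S (k+2)) = 1 / ((INR (k+2) + 1) * ln (INR (k+2) + 1) ^ 2)).
    { unfold tm. replace (2 <=? S (k+2))%nat with true by (symmetry; apply Nat.leb_le; lia).
      rewrite S_INR. reflexivity. }
    assert (2 <= INR (k+2)) by (rewrite plus_INR; simpl; pose proof (pos_INR k); lra).
    specialize (H H1). lra.
Qed.

Lemma alpha_pos : 0 < alpha.
Proof.
  unfold alpha, Series.
  rewrite (Lim_seq_ext _ psum) by apply sum_n_psum.
  assert (Ht2 : 0 < tm 2).
  { unfold tm. simpl (2 <=? 2)%nat. cbv iota.
    pose proof (ln_pos_ge2 (INR 2) ltac:(simpl; lra)).
    unfold Rdiv. rewrite Rmult_1_l. apply Rinv_0_lt_compat.
    apply Rmult_lt_0_compat; [simpl; lra|]. apply pow_lt; lra. }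
  assert (L1 : Rbar_le (Lim_seq (fun _ => tm 2)) (Lim_seq psum)).
  { apply Lim_seq_le_loc. exists 2%nat. intros n Hn.
    replace (tm 2) with (psum 2).
    - apply psum_mono; lia.
    - simpl. assert (tm 1 = 0) by (unfold tm; simpl; reflexivity).
      assert (tm 0 = 0) by (unfold tm; simpl; reflexivity). lra. }
  assert (L2 : Rbar_le (Lim_seq psum) (Lim_seq (fun _ => tm 2 + 1 / ln 2))).
  { apply Lim_seq_le_loc. exists 2%nat. intros n Hn.
    replace n with ((n-2)+2)%nat by lia. pose proof (psum_bound (n-2)).
    assert (2 <= INR (n - 2 + 2)) by (rewrite plus_INR; simpl; pose proof (pos_INR (n-2)); lra).
    pose proof (ln_pos_ge2 _ H0).
    assert (0 < 1 / ln (INR (n-2+2))) by (apply Rdiv_lt_0_compat; lra). lra. }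
  rewrite Lim_seq_const in L1, L2.
  destruct (Lim_seq psum); simpl in *; try contradiction. lra.
Qed.

Lemma ceil_ge1 x : 0 < x -> (1 <= Z.to_nat (ceilZ x))%nat.
Proof.
  intros H. unfold ceilZ. destruct (archimed (-x)) as [H1 H2].
  assert (up (-x) <= 0)%Z.
  { assert (IZR (up (-x)) < 1) by lra. apply lt_IZR in H0. lia. }
  lia.
Qed.

Lemma nl_ge l : (2 <= l)%nat -> (l + 1 <= nl l)%nat.
Proof.
  intros H. unfold nl.
  assert (0 < ln (INR l) ^ 2).
  { apply pow_lt, ln_pos_ge2. apply le_INR in H. simpl in H. lra. }
  pose proof (ceil_ge1 _ H0). nia.
Qed.

Lemma theta_pos l : (2 <= l)%nat -> 0 < theta l.
Proof.
  intros H. pose proof (nl_ge l H). unfold theta.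
  apply Rdiv_lt_0_compat. apply PI_RGT_0.
  assert (0 < INR (nl l - 1)) by (apply lt_0_INR; lia). lra.
Qed.

Lemma angle_range l j : (2 <= l)%nat -> (j <= nl l - 1)%nat ->
  0 <= INR j * theta l <= PI / 2.
Proof.
  intros H Hj. pose proof (nl_ge l H). pose proof (theta_pos l H).
  split. apply Rmult_le_pos; [apply pos_INR| lra].
  assert (0 < INR (nl l - 1)) by (apply lt_0_INR; lia).
  apply le_INR in Hj.
  apply Rle_trans with (INR (nl l - 1) * theta l).
  apply Rmult_le_compat_r; lra.
  unfold theta. right. field. lra.
Qed.

Lemma delta_pos l : (2 <= l)%nat -> 0 < delta l.
Proof.
  intros H. unfold delta. pose proof alpha_pos.
  apply le_INR in H. simpl in H. pose proof (ln_pos_ge2 _ H).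
  apply Rdiv_lt_0_compat; [lra|].
  apply Rmult_lt_0_compat; [apply Rmult_lt_0_compat; lra|]. apply pow_lt; lra.
Qed.

Lemma zl_mono a b : (a <= b)%nat -> zl a <= zl b.
Proof.
  intros H. unfold zl. pose proof alpha_pos. unfold Rdiv.
  apply Rmult_le_compat_r. apply Rlt_le, Rinv_0_lt_compat; lra.
  apply psum_mono; auto.
Qed.

Lemma zl_step l : (2 <= l)%nat -> zl l = zl (l - 1) + delta l.
Proof.
  intros H. unfold zl, delta. destruct l as [|l']; [lia|].
  replace (S l' - 1)%nat with l' by lia. simpl psum.
  unfold tm. replace (2 <=? S l')%nat with true by (symmetry; apply Nat.leb_le; lia).
  pose proof alpha_pos. assert (H2 : 2 <= INR (S l')) by (change 2 with (INR 2); apply le_INR; lia).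
  pose proof (ln_pos_ge2 _ H2).
  field. split; [lra|]. split; lra.
Qed.

Lemma zl_nonneg l : 0 <= zl l.
Proof. unfold zl. pose proof alpha_pos. pose proof (psum_nonneg l).
  apply Rdiv_le_0_compat; lra. Qed.

Definition cotge0 a : 0 < a <= PI/2 -> 0 <= cot a.
Proof.
  intros H. unfold cot. apply Rdiv_le_0_compat.
  apply cos_ge_0; lra. apply sin_gt_0; pose proof PI_RGT_0; lra.
Qed.

Lemma zlj_le1 l j : (2 <= l)%nat -> zlj l j <= 1.
Proof.
  intros H. unfold zlj. destruct (j <? nl l - 1)%nat eqn:E; [|lra].
  apply Nat.ltb_lt in E.
  pose proof (delta_pos l H).
  pose proof (angle_range l (j+1) H ltac:(lia)).
  pose proof (theta_pos l H).
  assert (0 < INR (j+1) * theta l) by (apply Rmult_lt_0_compat; [apply lt_0_INR; lia|lra]).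
  pose proof (cotge0 (INR (j+1) * theta l) ltac:(lra)).
  nra.
Qed.

Lemma Qbound (Q : nat -> nat -> R * R)
  (Heven : forall l j, Nat.even l = true -> (2 <= l)%nat -> (j < nl l)%nat ->
     Q l j = qeven l j)
  (Hodd : forall l j, Nat.even l = false -> (2 <= l)%nat -> (j < nl l)%nat ->
     (exists l' j', (2 <= l')%nat /\ (l' < l)%nat /\ (j' < nl l')%nat /\
                    Q l j = Q l' j')) :
  forall m l, (l <= m)%nat -> (2 <= l)%nat -> forall j, (j < nl l)%nat ->
    fst (Q l j) <= zl l /\ snd (Q l j) <= 1.
Proof.
  induction m; intros l Hl H2 j Hj; [lia|].
  destruct (Nat.even l) eqn:E.
  - rewrite Heven by auto. simpl. split; [lra|]. apply zlj_le1; auto.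
  - destruct (Hodd l j E H2 Hj) as [l' [j' [A1 [A2 [A3 A4]]]]].
    rewrite A4. destruct (IHm l' ltac:(lia) A1 j' A3).
    pose proof (zl_mono l' l ltac:(lia)). split; lra.
Qed.

Definition gb l j := if (j <? nl l - 1)%nat then
  delta l * (cos (INR j * theta l) - cot (INR (j+1) * theta l) * sin (INR j * theta l)) else 0.

Lemma fold_min_ge (f : nat*nat -> R) b L c : c <= b -> (forall p, In p L -> c <= f p) ->
  c <= fold_right (fun p m => Rmin (f p) m) b L.
Proof.
  intros Hb Hf. induction L; simpl; auto.
  apply Rmin_glb. apply Hf; simpl; auto. apply IHL. intros; apply Hf; simpl; auto.
Qed.

Lemma earlier_in l j p : In p (earlier l j) ->
  ((2 <= fst p)%nat /\ (fst p < l)%nat /\ (snd p < nl (fst p))%nat) \/ (fst p = l /\ (snd p < j)%nat).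
Proof.
  unfold earlier. intros H. apply in_app_iff in H. destruct H as [H|H].
  - apply in_flat_map in H. destruct H as [l' [H1 H2]]. apply in_seq in H1.
    apply in_map_iff in H2. destruct H2 as [j' [<- H3]]. apply in_seq in H3.
    left. simpl. lia.
  - apply in_map_iff in H. destruct H as [j' [<- H3]]. apply in_seq in H3. right. simpl. lia.
Qed.

Lemma cot_cmp a b : 0 < a -> a <= b -> b <= PI/2 -> cos b <= cot a * sin b.
Proof.
  intros. pose proof PI_RGT_0.
  assert (0 < sin a) by (apply sin_gt_0; lra).
  assert (0 <= sin (b - a)) by (apply sin_ge_0; lra).
  rewrite sin_minus in H4. unfold cot.
  assert (cos a / sin a * sin b - cos b = (sin b * cos a - cos b * sin a) / sin a) by (field; lra).
  assert (0 <= (sin b * cos a - cos b * sin a) / sin a) by (apply Rdiv_le_0_compat; lra).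
  lra.
Qed.

Lemma Kbound l j a b : (2 <= l)%nat -> (j < nl l)%nat -> a <= zl (l-1) -> b <= 1 ->
  gb l j <= (zl l * cos (INR j * theta l) + zlj l j * sin (INR j * theta l))
            - (a * cos (INR j * theta l) + b * sin (INR j * theta l)).
Proof.
  intros Hl Hj Ha Hb.
  pose proof (angle_range l j Hl ltac:(lia)).
  assert (Hc : 0 <= cos (INR j * theta l)) by (apply cos_ge_0; lra).
  assert (Hs : 0 <= sin (INR j * theta l)) by (apply sin_ge_0; pose proof PI_RGT_0; lra).
  pose proof (zl_step l Hl). pose proof (delta_pos l Hl).
  unfold gb, zlj.
  set (c := cos (INR j * theta l)) in *. set (s := sin (INR j * theta l)) in *.
  destruct (j <? nl l - 1)%nat.
  - assert (0 <= (zl l - a - delta l) * c) by (apply Rmult_le_pos; lra).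
    assert (0 <= (1 - b) * s) by (apply Rmult_le_pos; lra).
    match goal with |- ?L <= ?R => assert (R - L = (zl l - a - delta l) * c + (1 - b) * s) by ring end.
    lra.
  - assert (0 <= (zl l - a) * c) by (apply Rmult_le_pos; lra).
    assert (0 <= (1 - b) * s) by (apply Rmult_le_pos; lra).
    match goal with |- ?L <= ?R => assert (R - L = (zl l - a) * c + (1 - b) * s) by ring end.
    lra.
Qed.

Lemma Sbound l j j' : (2 <= l)%nat -> (j < nl l)%nat -> (j' < j)%nat ->
  gb l j <= (zlj l j - zlj l j') * sin (INR j * theta l).
Proof.
  intros Hl Hj Hj'.
  pose proof (angle_range l j Hl ltac:(lia)).
  assert (Hs : 0 <= sin (INR j * theta l)) by (apply sin_ge_0; pose proof PI_RGT_0; lra).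
  pose proof (delta_pos l Hl). pose proof (zlj_le1 l j' Hl).
  unfold gb. destruct (j <? nl l - 1)%nat eqn:E.
  - apply Nat.ltb_lt in E. unfold zlj.
    rewrite (proj2 (Nat.ltb_lt j (nl l - 1)) E).
    rewrite (proj2 (Nat.ltb_lt j' (nl l - 1)) ltac:(lia)).
    pose proof (theta_pos l Hl).
    assert (cos (INR j * theta l) <= cot (INR (j'+1) * theta l) * sin (INR j * theta l)).
    { apply cot_cmp; [| |lra].
      apply Rmult_lt_0_compat; [apply lt_0_INR; lia|lra].
      apply Rmult_le_compat_r; [lra|]. apply le_INR; lia. }
    nra.
  - unfold zlj at 1. rewrite E. apply Rmult_le_pos; lra.
Qed.

Lemma gap_ge (Q : nat -> nat -> R * R)
  (Heven : forall l j, Nat.even l = true -> (2 <= l)%nat -> (j < nl l)%nat ->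
     Q l j = qeven l j)
  (Hodd : forall l j, Nat.even l = false -> (2 <= l)%nat -> (j < nl l)%nat ->
     (exists l' j', (2 <= l')%nat /\ (l' < l)%nat /\ (j' < nl l')%nat /\
                    Q l j = Q l' j')) :
  forall l j, Nat.even l = true -> (2 < l)%nat -> (j < nl l)%nat -> gb l j <= gap Q l j.
Proof.
  intros l j E Hl Hj. unfold gap.
  assert (Hx : xv l j = (cos (INR j * theta l), sin (INR j * theta l))) by (unfold xv; rewrite E; auto).
  rewrite Hx, (Heven l j E ltac:(lia) Hj). unfold qeven, dot. simpl fst. simpl snd.
  apply fold_min_ge.
  - pose proof (Kbound l j 0 0 ltac:(lia) Hj (zl_nonneg _) ltac:(lra)). lra.
  - intros [l' j'] Hp. apply earlier_in in Hp. simpl fst in *. simpl snd in *.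
    destruct Hp as [[H1 [H2 H3]] | [H1 H2]].
    + destruct (Qbound Q Heven Hodd l' l' (le_n _) H1 j' H3) as [A1 A2].
      pose proof (zl_mono l' (l-1) ltac:(lia)).
      apply Kbound; auto; lia || lra.
    + subst l'. rewrite (Heven l j' E ltac:(lia) ltac:(lia)). unfold qeven. simpl fst. simpl snd.
      pose proof (Sbound l j j' ltac:(lia) Hj H2). nra.
Qed.

Lemma sin_half x : 0 <= x -> x <= 1 -> x / 2 <= sin x.
Proof.
  intros H1 H2. pose proof PI2_3_2. 
  destruct (sin_bound x 0 H1 ltac:(lra)) as [Hs _].
  unfold sin_approx in Hs. simpl in Hs. unfold sin_term in Hs. simpl in Hs. 
  assert (x*x <= 1) by nra. assert (0 <= x * (1 - x*x)) by (apply Rmult_le_pos; lra).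
  lra.
Qed.

Lemma fr_plus (L : list R) a : fold_right Rplus a L = fold_right Rplus 0 L + a.
Proof. induction L; simpl; [lra|]. rewrite IHL. lra. Qed.

Lemma sumR_S f n : sumR f (S n) = sumR f n + f n.
Proof.
  unfold sumR. rewrite seq_S, map_app, fold_right_app. simpl.
  rewrite fr_plus. lra.
Qed.

Lemma sumR_mono f g n : (forall j, (j < n)%nat -> f j <= g j) -> sumR f n <= sumR g n.
Proof.
  induction n; intros H. unfold sumR; simpl; lra.
  rewrite !sumR_S. pose proof (H n ltac:(lia)). pose proof (IHn ltac:(intros; apply H; lia)). lra.
Qed.

Lemma sumR_scal c f n : sumR (fun j => c * f j) n = c * sumR f n.
Proof.
  induction n. unfold sumR; simpl; lra.
  rewrite !sumR_S, IHn. lra.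
Qed.

Lemma harm m : ln (INR m + 1) <= sumR (fun j => 1 / (INR j + 1)) m.
Proof.
  induction m. unfold sumR; simpl. rewrite Rplus_0_l, ln_1. lra.
  rewrite sumR_S, S_INR.
  pose proof (pos_INR m).
  pose proof (ln_le_xm1 ((INR m + 1 + 1) / (INR m + 1)) ltac:(apply Rdiv_lt_0_compat; lra)).
  rewrite ln_div in H0 by lra.
  assert ((INR m + 1 + 1) / (INR m + 1) - 1 = 1 / (INR m + 1)) by (field; lra).
  lra.
Qed.

Lemma gb_lb l j : (3 <= l)%nat -> (j < nl l - 1)%nat -> delta l / 2 * (1 / (INR j + 1)) <= gb l j.
Proof.
  intros Hl Hj. pose proof (nl_ge l ltac:(lia)).
  pose proof (delta_pos l ltac:(lia)). pose proof (theta_pos l ltac:(lia)).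
  pose proof PI_RGT_0. pose proof PI_4.
  assert (Ht : theta l <= 1).
  { unfold theta. assert (3 <= INR (nl l - 1)) by (replace 3 with (INR 3) by (simpl; lra); apply le_INR; lia).
    apply Rle_trans with (PI / 6). unfold Rdiv. apply Rmult_le_compat_l; [lra|].
    apply Rinv_le_contravar; lra. lra. }
  unfold gb. rewrite (proj2 (Nat.ltb_lt j (nl l - 1)) Hj).
  pose proof (angle_range l (j+1) ltac:(lia) ltac:(lia)).
  rewrite plus_INR in *. simpl INR in *. 
  set (t := theta l) in *. set (d := delta l) in *.
  pose proof (pos_INR j).
  assert (Ha : 0 < (INR j + 1) * t) by (apply Rmult_lt_0_compat; lra).
  assert (Hsa : 0 < sin ((INR j + 1) * t)) by (apply sin_gt_0; lra).
  assert (Hsa2 : sin ((INR j + 1) * t) < (INR j + 1) * t) by (apply sin_lt_x; lra).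
  pose proof (sin_half t ltac:(lra) Ht).
  assert (E : cos (INR j * t) - cot ((INR j + 1) * t) * sin (INR j * t) = sin t / sin ((INR j + 1) * t)).
  { unfold cot. replace (sin t) with (sin ((INR j + 1) * t - INR j * t)) by (f_equal; ring).
    rewrite sin_minus. field. lra. }
  rewrite E. replace (d / 2 * (1 / (INR j + 1))) with (d * ((t/2) / ((INR j + 1) * t))) by (field; lra).
  apply Rmult_le_compat_l; [lra|].
  - unfold Rdiv. apply Rmult_le_compat; try lra.
    apply Rlt_le, Rinv_0_lt_compat; lra.
    apply Rinv_le_contravar; lra.
Qed.

Theorem corollary5p11 (Q : nat -> nat -> R * R)
  (Heven : forall l j, Nat.even l = true -> (2 <= l)%nat -> (j < nl l)%nat ->
     Q l j = qeven l j)
  (Hodd : forall l j, Nat.even l = false -> (2 <= l)%nat -> (j < nl l)%nat ->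
     (exists l' j', (2 <= l')%nat /\ (l' < l)%nat /\ (j' < nl l')%nat /\
                    Q l j = Q l' j') /\
     (forall l' j', (2 <= l')%nat -> (l' < l)%nat -> (j' < nl l')%nat ->
        dot (xv l j) (Q l' j') <= dot (xv l j) (Q l j))) :
  forall l : nat, Nat.even l = true -> (2 < l)%nat ->
    sumR (fun j => gap Q l j) (nl l) >= delta l * ln (INR (nl l)) / 2.
Proof.
  intros l E Hl.
  assert (Hodd' : forall l j, Nat.even l = false -> (2 <= l)%nat -> (j < nl l)%nat ->
     (exists l' j', (2 <= l')%nat /\ (l' < l)%nat /\ (j' < nl l')%nat /\ Q l j = Q l' j'))
    by (intros; apply Hodd; auto).
  pose proof (nl_ge l ltac:(lia)).
  pose proof (delta_pos l ltac:(lia)).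
  apply Rle_ge.
  apply Rle_trans with (sumR (gb l) (nl l)).
  2: { apply sumR_mono. intros j Hj. apply (gap_ge Q Heven Hodd'); auto. }
  replace (nl l) with (S (nl l - 1)) at 2 by lia.
  rewrite sumR_S.
  assert (gb l (nl l - 1) = 0) by (unfold gb; rewrite Nat.ltb_irrefl; auto).
  rewrite H1, Rplus_0_r.
  apply Rle_trans with (sumR (fun j => delta l / 2 * (1 / (INR j + 1))) (nl l - 1)).
  2: { apply sumR_mono. intros j Hj. apply gb_lb; lia. }
  rewrite sumR_scal.
  pose proof (harm (nl l - 1)).
  replace (INR (nl l - 1) + 1) with (INR (nl l)) in H2.
  2: { rewrite minus_INR by lia. simpl. lra. }
  nra.
Qed.
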